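(* Let $L$ be a Noetherian $\Sigma$-pseudofield such that $L^\sigma$ is a $\Sigma_1$-closed pseudofield. Then there exists a Noetherian $\Sigma_0$-pseudofield $B$ such that $L\cong F_{\Sigma_1}(B)$ as $\Sigma$-rings.
   Context: All rings are commutative with $1$. Fix $\Sigma_0=\mathbb Z$ with generator $\sigma$, a finite abelian group $\Sigma_1=\mathbb Z/t_1\mathbb Z\oplus\dots\oplus\mathbb Z/t_s\mathbb Z$ ($t_i\ge2$), and $\Sigma=\Sigma_0\oplus\Sigma_1$. For a subgroup $\Sigma'\subseteq\Sigma$, a $\Sigma'$-ring is a ring with an action of $\Sigma'$ by ring automorphisms; $\Sigma'$-ideals are $\Sigma'$-stable ideals; $L^\sigma$ is the ring of $\sigma$-invariants. A $\Sigma'$-ring is $\Sigma'$-simple if its only $\Sigma'$-ideals are $0$ and itself ($\neq0$). A ring is absolutely flat if every module over it is flat. A $\Sigma'$-pseudofield is an absolutely flat $\Sigma'$-simple ring; Noetherian if it is a Noetherian ring. A $\Sigma_1$-pseudofield $C$ is $\Sigma_1$-closed if $\sqrt I=\mathbb I(\mathbb V(I))$ for every $n$ and every $\Sigma_1$-ideal $I$ of the difference polynomial ring $C\{y_1,\dots,y_n\}_{\Sigma_1}$ (polynomial ring in indeterminates $\tau y_i$, $\tau\in\Sigma_1$), where $\mathbb V$ is the common zero set in $C^n$ and $\mathbb I$ the ideal of vanishing polynomials. For a $\Sigma_0$-ring $B$, $F_{\Sigma_1}(B)=\prod_{\mu\in\Sigma_1}B=\{f:\Sigma_1\to B\}$ with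 $\Sigma_0$ acting componentwise and $\Sigma_1$ acting by $(\mu f)(\tau)=f(\mu^{-1}\tau)$; this is a $\Sigma$-ring. *)

(* Defs.v *)
From HB Require Import structures.
From mathcomp Require Import all_boot all_order all_algebra all_fingroup.
From mathcomp Require Import mpoly.
Set Implicit Arguments. Unset Strict Implicit. Unset Printing Implicit Defensive.
Import GRing.Theory.
Local Open Scope ring_scope.

Section RingBasics.
Variable R : comNzRingType.

Definition is_ring_endo (f : R -> R) : Prop :=
  [/\ f 1 = 1, (forall x y, f (x + y) = f x + f y)
    & (forall x y, f (x * y) = f x * f y)].

Definition is_ring_auto (f : R -> R) : Prop := is_ring_endo f /\ bijective f.

Definition is_ideal (I : R -> Prop) : Prop :=
  [/\ I 0, (forall x y, I x -> I y -> I (x + y))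
    & (forall r x, I x -> I (r * x))].

Definition in_ideal_gen (s : seq R) (x : R) : Prop :=
  exists c : 'I_(size s) -> R, x = \sum_(i < size s) c i * s`_i.

Definition noetherian : Prop :=
  forall I : R -> Prop, is_ideal I ->
    exists s : seq R, forall x, I x <-> in_ideal_gen s x.

(* Flatness of an R-module, through the equational criterion (there is no
   tensor product of modules in the libraries): every relation
   sum a_i m_i = 0 is a consequence of relations in R. *)
Definition flat_module (M : lmodType R) : Prop :=
  forall (k : nat) (a : 'I_k -> R) (m : 'I_k -> M),
    \sum_(i < k) a i *: m i = 0 ->
    exists (l : nat) (b : 'I_k -> 'I_l -> R) (y : 'I_l -> M),
      (forall i, m i = \sum_(j < l) b i j *: y j) /\
      (forall j, \sum_(i < k) a i * b i j = 0).

Definition absolutely_flat : Prop := forall M : lmodType R, flat_module M.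

End RingBasics.

(* Actions.  Sigma0 = Z acts through the automorphism sigma (generator);
   the finite abelian group Sigma1 is a finGroupType G (written
   multiplicatively) acting through act : G -> R -> R.                 *)
Section Actions.
Variables (G : finGroupType) (R : comNzRingType).

Definition is_group_action (act : G -> R -> R) : Prop :=
  [/\ (forall g, is_ring_endo (act g)),
      (forall x, act 1%g x = x)
    & (forall g h x, act (g * h)%g x = act g (act h x))].

Definition is_sigma0_ring (sig : R -> R) : Prop := is_ring_auto sig.
Definition is_sigma1_ring (act : G -> R -> R) : Prop := is_group_action act.
Definition is_sigma_ring (sig : R -> R) (act : G -> R -> R) : Prop :=
  [/\ is_ring_auto sig, is_group_action act
    & (forall g x, sig (act g x) = act g (sig x))].

(* stability of a subset under the subgroup Sigma0 = <sigma> (i.e. under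
   sigma and sigma^-1) and under Sigma1 *)
Definition sigma0_stable (sig : R -> R) (I : R -> Prop) : Prop :=
  forall x, I x <-> I (sig x).
Definition sigma1_stable (act : G -> R -> R) (I : R -> Prop) : Prop :=
  forall g x, I x -> I (act g x).

Definition trivial_or_full (I : R -> Prop) : Prop :=
  (forall x, I x -> x = 0) \/ (forall x, I x).

(* simplicity (the ring is nonzero since R is a comNzRingType) *)
Definition sigma0_simple (sig : R -> R) : Prop :=
  forall I, is_ideal I -> sigma0_stable sig I -> trivial_or_full I.
Definition sigma1_simple (act : G -> R -> R) : Prop :=
  forall I, is_ideal I -> sigma1_stable act I -> trivial_or_full I.
Definition sigma_simple (sig : R -> R) (act : G -> R -> R) : Prop :=
  forall I, is_ideal I -> sigma0_stable sig I -> sigma1_stable act I ->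
    trivial_or_full I.

Definition sigma0_pseudofield (sig : R -> R) : Prop :=
  [/\ is_sigma0_ring sig, absolutely_flat R & sigma0_simple sig].
Definition sigma1_pseudofield (act : G -> R -> R) : Prop :=
  [/\ is_sigma1_ring act, absolutely_flat R & sigma1_simple act].
Definition sigma_pseudofield (sig : R -> R) (act : G -> R -> R) : Prop :=
  [/\ is_sigma_ring sig act, absolutely_flat R & sigma_simple sig act].

End Actions.

Section Fixed.
Variables (L : comNzRingType) (s : {rmorphism L -> L}).

Definition fixed_pred : pred L := [pred x | s x == x].

Lemma fixed_subring_closed : subring_closed fixed_pred.
Proof.
split=> [|x y|x y]; rewrite !inE ?rmorph1 //.
  by move=> /eqP sx /eqP sy; rewrite rmorphB sx sy.
by move=> /eqP sx /eqP sy; rewrite rmorphM sx sy.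
Qed.

HB.instance Definition _ :=
  GRing.isSubringClosed.Build L fixed_pred fixed_subring_closed.

Record fixring := FixRing { fix_val :> L; _ : fix_val \in fixed_pred }.
HB.instance Definition _ := [isSub for fix_val].
HB.instance Definition _ := [Choice of fixring by <:].
HB.instance Definition _ := [SubChoice_isSubComNzRing of fixring by <:].

(* the action of Sigma1 restricted to L^sigma (it preserves L^sigma when it
   commutes with sigma; insubd only makes the function total) *)
Definition fix_act (G : finGroupType) (act : G -> L -> L) (g : G)
  (x : fixring) : fixring := insubd x (act g (fix_val x)).

End Fixed.
Arguments fix_act {L} s {G} act g x.

(* Difference polynomial ring C{y_1..y_n}_{Sigma1}: polynomials over C in
   the indeterminates tau y_i, (tau, i) in G * 'I_n (enumerated by
   enum_rank).                                                         *)
Section DiffPoly.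
Variables (G : finGroupType) (C : comNzRingType) (act : G -> C -> C) (n : nat).

Notation dpoly := {mpoly C[#|{: G * 'I_n}|]}.

Definition dX (tau : G) (i : 'I_n) : dpoly := 'X_(enum_rank (tau, i)).

Definition dpoly_act (mu : G) (p : dpoly) : dpoly :=
  mmap (fun c => (act mu c)%:MP)
       (fun j => let v := enum_val j in dX (mu * v.1)%g v.2) p.

Definition deval (a : 'I_n -> C) (p : dpoly) : C :=
  p.@[fun j => let v := enum_val j in act v.1 (a v.2)].

Definition dV (I : dpoly -> Prop) (a : 'I_n -> C) : Prop :=
  forall p, I p -> deval a p = 0.
Definition dI (V : ('I_n -> C) -> Prop) (p : dpoly) : Prop :=
  forall a, V a -> deval a p = 0.

Definition radical (I : dpoly -> Prop) (p : dpoly) : Prop :=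
  exists m : nat, I (p ^+ m).

Definition dpoly_sigma1_ideal (I : dpoly -> Prop) : Prop :=
  is_ideal I /\ forall mu p, I p -> I (dpoly_act mu p).

End DiffPoly.

Definition sigma1_closed (G : finGroupType) (C : comNzRingType)
  (act : G -> C -> C) : Prop :=
  sigma1_pseudofield act /\
  forall (n : nat) (I : {mpoly C[#|{: G * 'I_n}|]} -> Prop),
    dpoly_sigma1_ideal act I ->
    forall p, radical I p <-> dI act (dV act I) p.

(* Isomorphism of Sigma-rings  L ~= F_{Sigma1}(B) = {ffun Sigma1 -> B}
   (componentwise ring structure and sigma-action; (mu f)(tau) =
   f (mu^-1 tau)).                                                     *)
Definition sigma_iso_F (G : finGroupType) (L B : comNzRingType)
  (sL : L -> L) (actL : G -> L -> L) (sB : B -> B)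
  (phi : L -> {ffun G -> B}) : Prop :=
  bijective phi /\
  [/\ phi 1 = [ffun => 1],
      (forall x y, phi (x + y) = [ffun t => phi x t + phi y t]),
      (forall x y, phi (x * y) = [ffun t => phi x t * phi y t]),
      (forall x, phi (sL x) = [ffun t => sB (phi x t)])
    & (forall mu x, phi (actL mu x) = [ffun t => phi x (mu^-1 * t)%g])].

(* Main.v *)
Require Import Defs.
From HB Require Import structures.
From mathcomp Require Import all_boot all_order all_algebra all_fingroup.
From mathcomp Require Import mpoly.
From Stdlib Require Import Classical.
Set Implicit Arguments. Unset Strict Implicit. Unset Printing Implicit Defensive.
Import GRing.Theory.
Local Open Scope ring_scope.

Definition idem (L : comNzRingType) := {x : L | (x * x == x) && (x != 0)}.

Section BDef.
Variables (L : comNzRingType) (e : idem L).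
Definition ev : L := sval e.
Lemma evv : ev * ev = ev. Proof. by rewrite /ev; case: e => x /= /andP[/eqP ->]. Qed.
Lemma ev0 : ev != 0. Proof. by rewrite /ev; case: e => x /= /andP[]. Qed.
Definition bpred : pred L := [pred x | x * ev == x].
Lemma bpred_zmod : zmod_closed bpred.
Proof.
split; first by rewrite inE mul0r.
by move=> x y; rewrite !inE => /eqP hx /eqP hy; rewrite mulrBl hx hy.
Qed.
HB.instance Definition _ := GRing.isZmodClosed.Build L bpred bpred_zmod.
Record Bsub := BSub { bval :> L; _ : bval \in bpred }.
HB.instance Definition _ := [isSub for bval].
HB.instance Definition _ := [Choice of Bsub by <:].
HB.instance Definition _ := [SubChoice_isSubZmodule of Bsub by <:].
Lemma bvalP (x : Bsub) : bval x * ev = bval x.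
Proof. by case: x => x /= /eqP. Qed.
Lemma bmul_subproof (x y : Bsub) : bval x * bval y \in bpred.
Proof. by rewrite inE -mulrA bvalP. Qed.
Definition bmul (x y : Bsub) : Bsub := BSub (bmul_subproof x y).
Lemma bone_subproof : ev \in bpred. Proof. by rewrite inE evv. Qed.
Definition bone : Bsub := BSub bone_subproof.
Lemma bmulA : associative bmul.
Proof. by move=> x y z; apply: val_inj; rewrite /= mulrA. Qed.
Lemma bmulC : commutative bmul.
Proof. by move=> x y; apply: val_inj; rewrite /= mulrC. Qed.
Lemma bmul1 : left_id bone bmul.
Proof. by move=> x; apply: val_inj; rewrite /= mulrC bvalP. Qed.
Lemma bmulDl : left_distributive bmul +%R.
Proof. by move=> x y z; apply: val_inj; rewrite /= mulrDl. Qed.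
Lemma bone0 : bone != 0.
Proof. by apply/eqP => /(congr1 val) /= /eqP; rewrite (negbTE ev0). Qed.
HB.instance Definition _ := GRing.Zmodule_isComNzRing.Build Bsub bmulA bmulC bmul1 bmulDl bone0.
Lemma bvalM (x y : Bsub) : bval (x * y) = bval x * bval y. Proof. by []. Qed.
Lemma bval1 : bval 1 = ev. Proof. by []. Qed.
Lemma bvalD (x y : Bsub) : bval (x + y) = bval x + bval y. Proof. by []. Qed.
Lemma bval0 : bval 0 = 0. Proof. by []. Qed.
Lemma bval_sum I (r : seq I) P (F : I -> Bsub) : bval (\sum_(i <- r | P i) F i) = \sum_(i <- r | P i) bval (F i).
Proof. exact: (big_morph _ bvalD bval0). Qed.
Lemma val_sumB I (r : seq I) P (F : I -> Bsub) : val (\sum_(i <- r | P i) F i) = \sum_(i <- r | P i) val (F i).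
Proof. exact: bval_sum. Qed.
Lemma valBP (x : Bsub) : val x * ev = val x.
Proof. exact: bvalP. Qed.
End BDef.


Section Endo.
Variables (R : comNzRingType) (f : R -> R) (hf : is_ring_endo f).
Lemma endo0 : f 0 = 0.
Proof. case: hf => _ hD _; apply/(@addrI _ (f 0)); by rewrite -hD !addr0. Qed.
Lemma endoD x y : f (x + y) = f x + f y. Proof. by case: hf. Qed.
Lemma endoM x y : f (x * y) = f x * f y. Proof. by case: hf. Qed.
Lemma endo1 : f 1 = 1. Proof. by case: hf. Qed.
Lemma endoN x : f (- x) = - f x.
Proof. apply/(@addrI _ (f x)); by rewrite -endoD !subrr endo0. Qed.
Lemma endo_sum I (r : seq I) P (F : I -> R) : f (\sum_(i <- r | P i) F i) = \sum_(i <- r | P i) f (F i).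
Proof. exact: (big_morph _ endoD endo0). Qed.
End Endo.

Section ModL.
Variables (L : comNzRingType) (e : idem L) (M : lmodType (Bsub e)).
Definition LM : Type := M.
HB.instance Definition _ := GRing.Zmodule.on LM.
Lemma scl_subproof (r : L) : r * ev e \in bpred e.
Proof. by rewrite inE -mulrA evv. Qed.
Definition scl (r : L) : Bsub e := BSub (scl_subproof r).
Definition lscale (r : L) (m : LM) : LM := (scl r *: (m : M)).
Lemma lscaleA a b v : lscale a (lscale b v) = lscale (a * b) v.
Proof.
rewrite /lscale scalerA; congr (_ *: _); apply: val_inj => /=.
by rewrite mulrACA evv.
Qed.
Lemma lscale1 : left_id 1 lscale.
Proof. move=> v; rewrite /lscale -[RHS]scale1r; congr (_ *: _); apply: val_inj => /=; exact: mul1r. Qed.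
Lemma lscaleDr : right_distributive lscale +%R.
Proof. by move=> a u v; rewrite /lscale scalerDr. Qed.
Lemma lscaleDl v : {morph lscale^~ v: a b / a + b}.
Proof.
move=> a b; rewrite /lscale -scalerDl; congr (_ *: _); apply: val_inj => /=.
by rewrite mulrDl.
Qed.
HB.instance Definition _ := GRing.Zmodule_isLmodule.Build L LM lscaleA lscale1 lscaleDr lscaleDl.

Lemma flat_transfer : flat_module LM -> flat_module M.
Proof.
move=> hF k a m ha.
have ha' : \sum_(i < k) bval (a i) *: (m i : LM) = 0.
  transitivity (\sum_(i < k) (a i *: m i : LM)); last exact: ha.
  apply: eq_bigr => i _.
  change (scl (bval (a i)) *: (m i : M) = a i *: m i); congr (_ *: _); apply: val_inj => /=.
  exact: bvalP.
have [l [b [y [hm hb]]]] := hF k (fun i => bval (a i)) m ha'.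
exists l, (fun i j => scl (b i j)), y; split.
  by move=> i; rewrite hm.
move=> j; apply: val_inj; change (bval (\sum_(i < k) a i * scl (b i j)) = bval (0 : Bsub e)).
rewrite bval_sum bval0.
rewrite -[RHS](mul0r (ev e)) -[in RHS](hb j) mulr_suml; apply: eq_bigr => i _.
by rewrite bvalM /= mulrA.
Qed.
End ModL.


Lemma ideal_sum (R : comNzRingType) (J : R -> Prop) (hJ : is_ideal J) I (r : seq I) (F : I -> R) :
  (forall i, J (F i)) -> J (\sum_(i <- r) F i).
Proof.
case: hJ => J0 JD JM hF; elim: r => [|x r IH]; first by rewrite big_nil.
by rewrite big_cons; apply: JD.
Qed.

Lemma in_ideal_gen_nth (R : comNzRingType) (s : seq R) (i : 'I_(size s)) : in_ideal_gen s s`_i.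
Proof.
exists (fun j => (j == i)%:R); rewrite (bigD1 i) //= eqxx mul1r big1 ?addr0 //.
by move=> j /negbTE ->; rewrite mul0r.
Qed.

Section Main.
Variables (G : finGroupType) (L : comNzRingType) (sL : {rmorphism L -> L}) (a : G -> L -> L) (e : idem L).
Hypotheses (hS : sigma_pseudofield sL a) (hN : noetherian L) (hse : sL (ev e) = ev e)
  (horth : forall g, g != 1%g -> a g (ev e) * ev e = 0) (hsum : \sum_g a g (ev e) = 1).

Local Notation e0 := (ev e).
Local Notation B := (Bsub e).

Lemma hend g : is_ring_endo (a g). Proof. by case: hS => [[_ [h _ _] _] _ _]. Qed.
Lemma ha1 x : a 1%g x = x. Proof. by case: hS => [[_ [_ h _] _] _ _]. Qed.
Lemma haM g h x : a (g * h)%g x = a g (a h x). Proof. by case: hS => [[_ [_ _ H] _] _ _]. Qed.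
Lemma hcomm g x : sL (a g x) = a g (sL x). Proof. by case: hS => [[_ _ h] _ _]. Qed.

Lemma aM g x y : a g (x * y) = a g x * a g y. Proof. exact: (endoM (hend g)). Qed.
Lemma aD g x y : a g (x + y) = a g x + a g y. Proof. exact: (endoD (hend g)). Qed.
Lemma a0 g : a g 0 = 0. Proof. exact: (endo0 (hend g)). Qed.
Lemma a1 g : a g 1 = 1. Proof. exact: (endo1 (hend g)). Qed.
Lemma a_sum g I (r : seq I) (F : I -> L) : a g (\sum_(i <- r) F i) = \sum_(i <- r) a g (F i).
Proof. exact: (endo_sum (hend g)). Qed.

Lemma orth g h : g != h -> a g e0 * a h e0 = 0.
Proof.
move=> ne; have -> : a g e0 = a h (a (h^-1 * g)%g e0) by rewrite -haM mulKVg.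
rewrite -(endoM (hend h)) horth ?(endo0 (hend h)) //.
by apply: contra ne => /eqP/(congr1 (mulg h)); rewrite mulKVg mulg1 => ->.
Qed.

Lemma phi_sub (x : L) (t : G) : e0 * a t^-1%g x \in bpred e.
Proof. by rewrite inE mulrC mulrA evv. Qed.
Definition phi (x : L) : {ffun G -> B} := [ffun t => BSub (phi_sub x t)].
Lemma phiE x t : bval (phi x t) = e0 * a t^-1%g x. Proof. by rewrite ffunE. Qed.

Lemma sB_sub (x : B) : sL (bval x) \in bpred e.
Proof. by rewrite inE -{1}hse -rmorphM bvalP. Qed.
Definition sB (x : B) : B := BSub (sB_sub x).

Definition psi (f : {ffun G -> B}) : L := \sum_t a t (bval (f t)).

Lemma phiK : cancel phi psi.
Proof.
move=> x; rewrite /psi (eq_bigr (fun t => a t e0 * x)) => [|t _].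
  by rewrite -mulr_suml hsum mul1r.
by rewrite phiE aM -haM mulgV ha1.
Qed.

Lemma psiK : cancel psi phi.
Proof.
move=> f; apply/ffunP => t; apply: val_inj.
change (bval (phi (psi f) t) = bval (f t)).
rewrite phiE /psi a_sum mulr_sumr (bigD1 t) //= big1 ?addr0.
  by rewrite -haM mulVg ha1 mulrC bvalP.
move=> u ne; rewrite -(haM t^-1 u) -(bvalP (f u)) aM mulrCA [e0 * _]mulrC horth ?mulr0 //.
by apply: contra ne => /eqP/(congr1 (mulg t)); rewrite mulKVg mulg1 => ->.
Qed.

Lemma phi1 : phi 1 = [ffun => 1].
Proof. apply/ffunP => t; rewrite !ffunE; apply: val_inj => /=. by rewrite a1 mulr1. Qed.
Lemma phiD x y : phi (x + y) = [ffun t => phi x t + phi y t].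
Proof. apply/ffunP => t; rewrite !ffunE; apply: val_inj => /=. by rewrite aD mulrDr. Qed.
Lemma phiM x y : phi (x * y) = [ffun t => phi x t * phi y t].
Proof. apply/ffunP => t; rewrite !ffunE; apply: val_inj => /=. by rewrite aM mulrACA evv. Qed.
Lemma phiS x : phi (sL x) = [ffun t => sB (phi x t)].
Proof. apply/ffunP => t; rewrite !ffunE; apply: val_inj => /=. by rewrite rmorphM hse hcomm. Qed.
Lemma phiA mu x : phi (a mu x) = [ffun t => phi x (mu^-1 * t)%g].
Proof. apply/ffunP => t; rewrite !ffunE; apply: val_inj => /=. by rewrite -haM invMg invgK. Qed.

Lemma iso : sigma_iso_F sL a sB phi.
Proof.
split; first by exists psi; [exact: phiK | exact: psiK].
split; [exact: phi1 | exact: phiD | exact: phiM | exact: phiS | exact: phiA].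
Qed.

Lemma sB_auto : is_ring_auto sB.
Proof.
split.
  split.
  - by apply: val_inj => /=; rewrite hse.
  - by move=> x y; apply: val_inj => /=; rewrite rmorphD.
  - by move=> x y; apply: val_inj => /=; rewrite rmorphM.
case: hS => [[[_ [g c1 c2]] _ _] _ _].
have sub (x : B) : g (bval x) \in bpred e.
  by rewrite inE; apply/eqP; apply: (can_inj c1); rewrite rmorphM hse c2 bvalP.
exists (fun x => BSub (sub x)).
  by move=> x; apply: val_inj => /=; rewrite c1.
by move=> x; apply: val_inj => /=; rewrite c2.
Qed.

Lemma phi0 t : phi 0 t = 0.
Proof. by apply: val_inj; rewrite /= ffunE /= a0 mulr0. Qed.

Lemma B_simple : sigma0_simple sB.
Proof.
move=> J hJ hs.
pose I x := forall t, J (phi x t).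
have hI : is_ideal I.
  case: hJ => J0 JD JM; split.
  - by move=> t; rewrite phi0.
  - by move=> x y hx hy t; rewrite phiD ffunE; apply: JD.
  - by move=> r x hx t; rewrite phiM ffunE; apply: JM.
have h0 : sigma0_stable sL I.
  by move=> x; split => hx t; [rewrite phiS ffunE -hs | move: (hx t); rewrite phiS ffunE -hs].
have h1 : sigma1_stable a I.
  by move=> g x hx t; rewrite phiA ffunE.
case: hS => _ _ hsimp; case: (hsimp I hI h0 h1) => [triv|full]; [left|right].
  move=> y Jy; apply: val_inj; rewrite /=; apply: triv => t.
  have [->|ne] := eqVneq t 1%g.
    suff -> : phi (bval y) 1%g = y by [].
    by apply: val_inj; rewrite /= ffunE /= invg1 ha1 mulrC bvalP.
  suff -> : phi (bval y) t = 0 by case: hJ.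
  apply: val_inj; rewrite /= ffunE /= -(bvalP y) aM mulrCA [e0 * _]mulrC horth ?mulr0 //.
  by rewrite eq_invg1.
move=> y; have := full 1 1%g; rewrite phi1 ffunE => J1.
by case: hJ => _ _ JM; rewrite -[y]mulr1; apply: JM.
Qed.

Lemma B_noeth : noetherian B.
Proof.
move=> J hJ.
pose I x := J (scl e x).
have hI : is_ideal I.
  case: hJ => J0 JD JM; split.
  - by rewrite /I (_ : scl e 0 = 0) //; apply: val_inj; rewrite /= mul0r.
  - move=> x y hx hy; rewrite /I (_ : scl e (x + y) = scl e x + scl e y); first exact: JD.
    by apply: val_inj; rewrite /= mulrDl.
  - move=> r x hx; rewrite /I (_ : scl e (r * x) = scl e r * scl e x); first exact: JM.
    by apply: val_inj; rewrite /= mulrACA evv.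
have [s hs] := hN hI.
have sclK (y : B) : scl e (bval y) = y by apply: val_inj; rewrite /= bvalP.
have nthE (i : 'I_(size s)) : (map (scl e) s)`_i = scl e s`_i.
  by apply: val_inj; rewrite (nth_map 0) //= ?mul0r.
exists (map (scl e) s) => y; split.
  move=> Jy; have : I (bval y) by rewrite /I sclK.
  move/hs => [c hc]; rewrite /in_ideal_gen size_map; exists (fun i => scl e (c i)).
  apply: val_inj; rewrite val_sumB -[LHS]/(bval y) -(bvalP y) hc mulr_suml; apply: eq_bigr => i _.
  by rewrite nthE /= mulrACA evv.
rewrite /in_ideal_gen size_map => -[c ->]; apply: ideal_sum => // i.
case: hJ => _ _ JM; apply: JM; rewrite nthE; apply/hs; exact: in_ideal_gen_nth.
Qed.

Lemma main_B : [/\ sigma0_pseudofield sB, noetherian B & sigma_iso_F sL a sB phi].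
Proof.
split; [split | exact: B_noeth | exact: iso].
- exact: sB_auto.
- by move=> M; apply: flat_transfer; case: hS => _ hf _; apply: hf.
- exact: B_simple.
Qed.
End Main.


Section NS.
Variables (G : finGroupType) (C : comNzRingType) (act : G -> C -> C).
Hypothesis hact : is_group_action act.
Local Notation N := #|{: G * 'I_1}|.
Local Notation dpoly := {mpoly C[N]}.
Implicit Types p q : {mpoly C[#|{: G * 'I_1}|]}.

Definition fC (f : C -> C) (hf : is_ring_endo f) (c : C) : dpoly := (f c)%:MP.
Lemma fC_add f (hf : is_ring_endo f) : additive (fC hf).
Proof. by move=> x y; rewrite /fC (endoD hf) (endoN hf) rmorphB. Qed.
Lemma fC_mul f (hf : is_ring_endo f) : multiplicative (fC hf).
Proof. by split => [x y|]; rewrite /fC ?(endoM hf) ?(endo1 hf) ?rmorphM ?rmorph1. Qed.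
HB.instance Definition _ f (hf : is_ring_endo f) := GRing.isAdditive.Build C dpoly (fC hf) (fC_add hf).
HB.instance Definition _ f (hf : is_ring_endo f) := GRing.isMultiplicative.Build C dpoly (fC hf) (fC_mul hf).

Lemma hendC g : is_ring_endo (act g). Proof. by case: hact. Qed.
Lemma hact1 x : act 1%g x = x. Proof. by case: hact. Qed.

Definition hX (mu : G) (j : 'I_N) : dpoly := let v := enum_val j in dX C (mu * v.1)%g v.2.

Lemma dpa_E mu p : dpoly_act act mu p = mmap (fC (hendC mu)) (hX mu) p.
Proof. by []. Qed.

Lemma dpaM mu p q : dpoly_act act mu (p * q) = dpoly_act act mu p * dpoly_act act mu q.
Proof. by rewrite !dpa_E rmorphM. Qed.
Lemma dpaB mu p q : dpoly_act act mu (p - q) = dpoly_act act mu p - dpoly_act act mu q.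
Proof. by rewrite !dpa_E rmorphB. Qed.
Lemma dpaD mu p q : dpoly_act act mu (p + q) = dpoly_act act mu p + dpoly_act act mu q.
Proof. by rewrite !dpa_E rmorphD. Qed.
Lemma dpa0 mu : dpoly_act act (n:=1) mu 0 = 0.
Proof. by rewrite !dpa_E rmorph0. Qed.
Lemma dpa1 mu : dpoly_act act (n:=1) mu 1 = 1.
Proof. by rewrite !dpa_E rmorph1. Qed.
Lemma dpa_sum mu I (r : seq I) (F : I -> dpoly) : dpoly_act act mu (\sum_(i <- r) F i) = \sum_(i <- r) dpoly_act act mu (F i).
Proof. by rewrite !dpa_E rmorph_sum. Qed.
Lemma dpaX mu nu (i : 'I_1) : dpoly_act act mu (dX C nu i) = dX C (mu * nu)%g i.
Proof. by rewrite dpa_E /dX mmapX mmap1U /hX enum_rankK. Qed.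

Definition evt (t : G) (p : dpoly) : C := p.@[fun j => ((enum_val j).1 == t)%:R].
Lemma evtX t nu (i : 'I_1) : evt t (dX C nu i) = (nu == t)%:R.
Proof. by rewrite /evt /dX mevalXU enum_rankK. Qed.


Definition Fl (l : seq G) p := foldr (@dpoly_act G C act 1) p l.
Lemma FlM l p q : Fl l (p * q) = Fl l p * Fl l q.
Proof. by elim: l => //= mu l IH; rewrite IH dpaM. Qed.
Lemma FlD l p q : Fl l (p + q) = Fl l p + Fl l q.
Proof. by elim: l => //= mu l IH; rewrite IH dpaD. Qed.
Lemma Fl0 l : Fl l 0 = 0.
Proof. by elim: l => //= mu l ->; rewrite dpa0. Qed.
Lemma Fl1 l : Fl l 1 = 1.
Proof. by elim: l => //= mu l ->; rewrite dpa1. Qed.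

Definition Id p : Prop := forall l t, evt t (Fl l p) = 0.
Lemma Id_ideal : dpoly_sigma1_ideal act Id.
Proof.
split; first split.
- by move=> l t; rewrite Fl0 /evt rmorph0.
- by move=> p q hp hq l t; rewrite FlD /evt rmorphD /= -!/(evt _ _) hp hq addr0.
- by move=> r p hp l t; rewrite FlM /evt rmorphM /= -!/(evt _ _) hp mulr0.
by move=> mu p hp l t; rewrite /Fl -foldr_rcons; apply: hp.
Qed.

Definition Xn (nu : G) : dpoly := dX C nu ord0.
Definition Pgen p : Prop :=
  [\/ exists nu, p = Xn nu * Xn nu - Xn nu,
       exists nu nu', nu != nu' /\ p = Xn nu * Xn nu'
     | p = \sum_nu Xn nu - 1].

Lemma Pgen_act mu p : Pgen p -> Pgen (dpoly_act act mu p).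
Proof.
case=> [[nu ->]|[nu [nu' [ne ->]]]|->].
- by apply: Or31; exists (mu * nu)%g; rewrite dpaB dpaM /Xn dpaX.
- apply: Or32; exists (mu * nu)%g, (mu * nu')%g; split; last by rewrite dpaM /Xn !dpaX.
  by rewrite (inj_eq (mulgI mu)).
apply: Or33; rewrite dpaB dpa1 dpa_sum; congr (_ - _).
rewrite [RHS](reindex_inj (mulgI mu)) /=; apply: eq_bigr => nu _.
by rewrite /Xn dpaX.
Qed.

Lemma Pgen_Fl l p : Pgen p -> Pgen (Fl l p).
Proof. by elim: l => //= mu l IH hp; apply: Pgen_act; apply: IH. Qed.

Lemma evtXn t nu : evt t (Xn nu) = (nu == t)%:R.
Proof. exact: evtX. Qed.

Lemma Pgen_ev t p : Pgen p -> evt t p = 0.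
Proof.
rewrite /evt; case=> [[nu ->]|[nu [nu' [ne ->]]]|->]; rewrite ?rmorphB ?rmorphM /= -!/(evt _ _) ?evtXn.
- by case: eqP; rewrite ?mulr1 ?mulr0 subrr.
- case: (eqVneq nu t) => [e1|]; last by rewrite mul0r.
  by case: (eqVneq nu' t) => [e2|]; [move: ne; rewrite e1 e2 eqxx | rewrite mulr0].
rewrite /evt rmorph_sum rmorph1 /= -/(evt _ _).
rewrite (bigD1 t) //= big1 => [|nu ne]; last by rewrite -/(evt _ _) evtXn (negbTE ne).
by rewrite -/(evt _ _) evtXn eqxx addr0 subrr.
Qed.

Lemma Pgen_Id p : Pgen p -> Id p.
Proof. by move=> hp l t; apply: Pgen_ev; apply: Pgen_Fl. Qed.

Lemma not_Id1 : ~ Id 1.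
Proof. by move=> /(_ [::] 1%g) /=; rewrite /evt rmorph1; apply/eqP; rewrite oner_eq0. Qed.

Lemma devalXn (a : 'I_1 -> C) nu : deval act a (Xn nu) = act nu (a ord0).
Proof. by rewrite /deval /Xn /dX mevalXU enum_rankK. Qed.

End NS.


Lemma extract (G : finGroupType) (C : comNzRingType) (act : G -> C -> C) :
  is_group_action act ->
  (forall I : {mpoly C[#|{: G * 'I_1}|]} -> Prop,
    dpoly_sigma1_ideal act I -> forall p, radical I p <-> dI act (dV act I) p) ->
  exists c : C, [/\ forall nu, act nu c * act nu c = act nu c,
    forall nu nu', nu != nu' -> act nu c * act nu' c = 0 & \sum_nu act nu c = 1].
Proof.
move=> hact hNS.
have nI : ~ dI act (dV act (Id act)) 1.
  move=> /(hNS _ (Id_ideal hact)) [m]; rewrite expr1n; exact: (not_Id1 (act:=act)).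
have [a ha] := not_all_ex_not _ _ nI.
have [hV _] := imply_to_and _ _ ha.
have dXn := devalXn act a; rewrite /deval in dXn hV.
exists (a ord0); split.
- move=> nu; apply/eqP; rewrite -subr_eq0; apply/eqP.
  have hp : Pgen (Xn C nu * Xn C nu - Xn C nu) by apply: Or31; exists nu.
  have := hV _ (Pgen_Id hact hp).
  by rewrite /deval rmorphB rmorphM /= !dXn.
- move=> nu nu' ne.
  have hp : Pgen (Xn C nu * Xn C nu') by apply: Or32; exists nu, nu'.
  have := hV _ (Pgen_Id hact hp).
  by rewrite /deval rmorphM /= !dXn.
apply/eqP; rewrite -subr_eq0; apply/eqP.
have hp : Pgen (\sum_(nu : G) Xn C nu - 1) by rewrite /Pgen; apply: Or33.
have := hV _ (Pgen_Id hact hp).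
rewrite /deval rmorphB rmorph_sum rmorph1 /=.
by under eq_bigr do rewrite dXn.
Qed.

Theorem proposition7 (G : finGroupType) (L : comNzRingType)
  (sL : {rmorphism L -> L}) (actL : G -> L -> L) :
  abelian [set: G] ->
  sigma_pseudofield sL actL ->
  noetherian L ->
  sigma1_closed (fix_act sL actL) ->
  exists (B : comNzRingType) (sB : B -> B) (phi : L -> {ffun G -> B}),
    [/\ sigma0_pseudofield sB, noetherian B & sigma_iso_F sL actL sB phi].
Proof.
move=> _ hS hN [[hact _ _] hNS].
have [c [hid hor hsu]] := extract hact (hNS 1%N).
have hcm g x : sL (actL g x) = actL g (sL x) by case: hS => [[_ _ H] _ _].
have ha1 x : actL 1%g x = x by case: hS => [[_ [_ H _] _] _ _].
have hfx (x : fixring sL) : sL (val x) = val x by apply/eqP; exact: (valP x).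
have vact g (x : fixring sL) : val (fix_act sL actL g x) = actL g (val x).
  by rewrite /fix_act val_insubd inE hcm hfx eqxx.
pose e0 : L := val c.
have hid' nu : actL nu e0 * actL nu e0 = actL nu e0.
  by rewrite /e0 -!vact -rmorphM hid.
have hor' nu nu' : nu != nu' -> actL nu e0 * actL nu' e0 = 0.
  by move=> ne; rewrite /e0 -!vact -rmorphM hor // rmorph0.
have hsu' : \sum_nu actL nu e0 = 1.
  by rewrite /e0 (eq_bigr (fun nu => val (fix_act sL actL nu c))) => [|nu _]; rewrite ?vact // -rmorph_sum hsu rmorph1.
have ne0 : e0 != 0.
  apply/eqP => h0; move: hsu'; rewrite h0 big1 => [|nu _]; last exact: (endo0 (hend hS nu)).
  by move/eqP; rewrite eq_sym oner_eq0.
have pe : (e0 * e0 == e0) && (e0 != 0).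
  by rewrite ne0 andbT; have := hid' 1%g; rewrite !ha1 => ->.
pose e : idem L := exist _ e0 pe.
have hse : sL (ev e) = ev e by exact: hfx.
have horth g : g != 1%g -> actL g (ev e) * ev e = 0.
  by move=> ne; have := hor' g 1%g ne; rewrite ha1.
exists (Bsub e), (sB hse), (phi actL e).
exact: (main_B hS hN hse horth hsu').
Qed.
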